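(* Let $A$ be a semiprime $2$-torsion free associative algebra and let $Q$ be a subalgebra of $Q_s(A)$ containing $A$. Then $[Q^{(-)},Q^{(-)}]/Z([Q^{(-)},Q^{(-)}])$ is a Lie algebra of quotients of $[A^{(-)},A^{(-)}]/Z([A^{(-)},A^{(-)}])$ (the latter being naturally a Lie subalgebra of the former).
   Context: Algebras are over a commutative unital ring $\Phi$. For an associative algebra $A$, $A^{(-)}$ is the Lie algebra on $A$ with $[x,y]=xy-yx$; $[A^{(-)},A^{(-)}]$ is the $\Phi$-span of all $[x,y]$, a Lie subalgebra, and $Z(\cdot)$ denotes the center of a Lie algebra. $A$ is $2$-torsion free if $2x=0\Rightarrow x=0$. $Q_s(A)$ is the Martindale symmetric algebra of quotients of the semiprime algebra $A$: the elements $q$ of the maximal left quotient algebra $Q^l_{\max}(A)$ for which some essential ideal $I$ of $A$ satisfies $Iq+qI\subseteq A$. For a Lie subalgebra $L\subseteq Q$, $Q$ is an algebra of quotients of $L$ if for every nonzero $q\in Q$ there is an ideal $I$ of $L$ with $\mathrm{Ann}_L(I)=\{a\in L:[a,I]=0\}=0$ and $0\ne[I,q]\subseteq L$. *)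

(* Defs.v *)
From HB Require Import structures.
From mathcomp Require Import all_boot all_order all_algebra.
Set Implicit Arguments. Unset Strict Implicit. Unset Printing Implicit Defensive.
Import GRing.Theory.
Local Open Scope ring_scope.

(* Everything lives inside an ambient associative algebra [S] over the
   commutative unital ring [R] (= Phi).  Subalgebras, ideals, Lie
   subalgebras are predicates [S -> Prop]. *)
Section Defs.
Variables (R : comPzRingType) (S : algType R).

Definition lie (x y : S) : S := x * y - y * x.

Definition is_subalg (A : S -> Prop) : Prop :=
  [/\ A 0,
      (forall x y, A x -> A y -> A (x + y)),
      (forall (c : R) x, A x -> A (c *: x)) &
      (forall x y, A x -> A y -> A (x * y))].

Definition is_ideal (A I : S -> Prop) : Prop :=
  [/\ (forall x, I x -> A x),
      I 0,
      (forall x y, I x -> I y -> I (x + y)),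
      (forall (c : R) x, I x -> I (c *: x)) &
      (forall a x, A a -> I x -> I (a * x) /\ I (x * a))].

Definition semiprime (A : S -> Prop) : Prop :=
  forall I, is_ideal A I -> (forall x y, I x -> I y -> x * y = 0) ->
    forall x, I x -> x = 0.

Definition two_torsion_free (A : S -> Prop) : Prop :=
  forall a, A a -> a *+ 2 = 0 -> a = 0.

Definition essential_ideal (A I : S -> Prop) : Prop :=
  is_ideal A I /\
  forall J, is_ideal A J -> (exists j, J j /\ j <> 0) ->
    exists x, I x /\ J x /\ x <> 0.

(* [S] (together with the embedding of A as a subset) is the Martindale
   symmetric algebra of quotients Q_s(A) of the semiprime algebra A,
   given by its standard characterisation. *)
Definition is_Qs (A : S -> Prop) : Prop :=
  [/\
      (forall q : S, exists I, essential_ideal A I /\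
          forall x, I x -> A (x * q) /\ A (q * x)),
      (forall (q : S) I, essential_ideal A I ->
          (forall x, I x -> x * q = 0) -> q = 0) &
      (forall I (f g : S -> S), essential_ideal A I ->
          (forall x, I x -> A (f x) /\ A (g x)) ->
          (forall x y, I x -> I y -> f (x + y) = f x + f y /\ g (x + y) = g x + g y) ->
          (forall (c : R) x, I x -> f (c *: x) = c *: f x /\ g (c *: x) = c *: g x) ->
          (forall a x, A a -> I x -> f (a * x) = a * f x /\ g (x * a) = g x * a) ->
          (forall x y, I x -> I y -> f x * y = x * g y) ->
          exists q : S, forall x, I x -> x * q = f x /\ q * x = g x)].

(* [Q^(-), Q^(-)]: the Phi-span of all [x,y], x y in Q.  Since
   c [x,y] = [c x, y], it is the set of finite sums of commutators. *)
Definition comm_span (Q : S -> Prop) (z : S) : Prop :=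
  exists s : seq (S * S), (forall p, p \in s -> Q p.1 /\ Q p.2) /\
    z = \sum_(p <- s) lie p.1 p.2.

Definition lie_center (L : S -> Prop) (z : S) : Prop :=
  L z /\ forall y, L y -> lie z y = 0.

Definition is_lie_ideal (L J : S -> Prop) : Prop :=
  [/\ (forall x, J x -> L x),
      J 0,
      (forall x y, J x -> J y -> J (x + y)),
      (forall (c : R) x, J x -> J (c *: x)) &
      (forall a x, L a -> J x -> J (lie a x))].

(* Lie algebra of quotients, stated for the quotients
   LQ / Z(LQ)  (big)  and  LA / Z(LA)  (small) through representatives:
   the natural map LA/Z(LA) -> LQ/Z(LQ) is well defined and injective
   (Z(LA) ⊆ Z(LQ), LA ∩ Z(LQ) ⊆ Z(LA)), and for every nonzero class
   qbar of LQ/Z(LQ) there is an ideal Ibar of LA/Z(LA) (the image of an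
   ideal J of LA) with zero annihilator in LA/Z(LA) and
   0 <> [Ibar, qbar] ⊆ LA/Z(LA). *)
Definition quotient_lie_algebra_of_quotients (LA LQ : S -> Prop) : Prop :=
  [/\ (forall x, LA x -> LQ x),
      (forall z, lie_center LA z -> lie_center LQ z),
      (forall z, LA z -> lie_center LQ z -> lie_center LA z) &
      forall q, LQ q -> ~ lie_center LQ q ->
        exists J, [/\ is_lie_ideal LA J,
          (forall a, LA a -> (forall j, J j -> lie_center LA (lie a j)) ->
              lie_center LA a),
          (exists j, J j /\ ~ lie_center LQ (lie j q)) &
          (forall j, J j -> exists a, LA a /\ lie_center LQ (lie j q - a))]].

End Defs.

(* Main.v *)
Require Import Defs.
From HB Require Import structures.
From mathcomp Require Import all_boot all_order all_algebra.
From Stdlib Require Import Classical_Prop.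
Set Implicit Arguments. Unset Strict Implicit. Unset Printing Implicit Defensive.
Import GRing.Theory.
Local Open Scope ring_scope.

Section Lie.
Variables (R : comPzRingType) (S : algType R).
Implicit Types x y z a b c : S.

Definition central (z : S) := forall s : S, z * s = s * z.

Lemma lieE x y : lie x y = x * y - y * x. Proof. by []. Qed.
Lemma lie0l y : lie 0 y = 0 :> S. Proof. by rewrite lieE mul0r mulr0 subr0. Qed.
Lemma lie0r y : lie y 0 = 0 :> S. Proof. by rewrite lieE mul0r mulr0 subr0. Qed.
Lemma liexx x : lie x x = 0. Proof. by rewrite lieE subrr. Qed.
Lemma lieDl x y z : lie (x + y) z = lie x z + lie y z.
Proof. by rewrite !lieE mulrDl mulrDr opprD addrACA. Qed.
Lemma lieDr x y z : lie z (x + y) = lie z x + lie z y.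
Proof. by rewrite !lieE mulrDl mulrDr opprD addrACA. Qed.
Lemma lieNl x y : lie (- x) y = - lie x y.
Proof. by rewrite !lieE mulNr mulrN opprB addrC opprK. Qed.
Lemma lieNr x y : lie y (- x) = - lie y x.
Proof. by rewrite !lieE mulNr mulrN opprB addrC opprK. Qed.
Lemma lieC x y : lie x y = - lie y x.
Proof. by rewrite !lieE opprB. Qed.
Lemma lieZl (k : R) x y : lie (k *: x) y = k *: lie x y.
Proof. by rewrite !lieE scalerBr scalerAl scalerAr. Qed.
Lemma lieM x y z : lie x (y * z) = lie x y * z + y * lie x z.
Proof.
rewrite !lieE mulrBl mulrBr !mulrA addrA; congr (_ + _).
by rewrite addrNK.
Qed.
Lemma jacobi a x y : lie a (lie x y) = lie (lie a x) y + lie x (lie a y).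
Proof.
rewrite [lie x y]lieE lieDr lieNr !lieM.
set d1 := lie a x; set d2 := lie a y.
rewrite !lieE opprD [- (d2 * x) + _]addrC addrACA.
by [].
Qed.
End Lie.
Section Main.
Variables (R : comPzRingType) (S : algType R) (A : S -> Prop).
Hypotheses (hA : is_subalg A) (hsp : semiprime A) (h2 : two_torsion_free A) (hQs : is_Qs A).
Implicit Types x y z a b c e : S.

Lemma A0 : A 0. Proof. by case: hA. Qed.
Lemma AD x y : A x -> A y -> A (x + y). Proof. by case: hA => _ h _ _; apply: h. Qed.
Lemma AZ (k : R) x : A x -> A (k *: x). Proof. by case: hA => _ _ h _; apply: h. Qed.
Lemma AM x y : A x -> A y -> A (x * y). Proof. by case: hA => _ _ _ h; apply: h. Qed.
Lemma AN x : A x -> A (- x). Proof. by move=> Ax; rewrite -scaleN1r; apply: AZ. Qed.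
Lemma AB x y : A x -> A y -> A (x - y). Proof. by move=> Ax Ay; apply: AD => //; apply: AN. Qed.
Lemma Alie x y : A x -> A y -> A (lie x y). Proof. by move=> Ax Ay; apply: AB; apply: AM. Qed.

Lemma idealA : is_ideal A A.
Proof. split=> //; [exact: A0| exact: AD | exact: AZ | by move=> a x Aa Ax; split; apply: AM]. Qed.

Section Ideal.
Variable I : S -> Prop.
Hypothesis hI : is_ideal A I.
Lemma IA x : I x -> A x. Proof. by case: hI => h _ _ _ _; apply: h. Qed.
Lemma I0 : I 0. Proof. by case: hI. Qed.
Lemma ID x y : I x -> I y -> I (x + y). Proof. by case: hI => _ _ h _ _; apply: h. Qed.
Lemma IZ (k : R) x : I x -> I (k *: x). Proof. by case: hI => _ _ _ h _; apply: h. Qed.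
Lemma IMl a x : A a -> I x -> I (a * x). Proof. by case: hI => _ _ _ _ h Aa Ix; case: (h a x Aa Ix). Qed.
Lemma IMr a x : A a -> I x -> I (x * a). Proof. by case: hI => _ _ _ _ h Aa Ix; case: (h a x Aa Ix). Qed.
Lemma IN x : I x -> I (- x). Proof. by move=> Ix; rewrite -scaleN1r; apply: IZ. Qed.
Lemma IB x y : I x -> I y -> I (x - y). Proof. by move=> Ix Iy; apply: ID => //; apply: IN. Qed.
Lemma IMM x y : I x -> I y -> I (x * y). Proof. by move=> Ix Iy; apply: IMr => //; apply: IA. Qed.
Lemma Ilie x y : I x -> I y -> I (lie x y). Proof. by move=> Ix Iy; apply: IB; apply: IMM. Qed.
Lemma Ilie_l a x : A a -> I x -> I (lie a x). Proof. by move=> Aa Ix; apply: IB; [apply: IMl|apply: IMr]. Qed.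
End Ideal.

Lemma ann_r P m : is_ideal A P -> P m -> (forall p, P p -> m * p = 0) -> m = 0.
Proof.
move=> hP Pm mP0.
apply: (hsp (I := fun m => P m /\ forall p, P p -> m * p = 0)); last by split.
- split.
  + by move=> x [/(IA hP)].
  + by split=> [|p _]; [apply: I0 | rewrite mul0r].
  + move=> x y [Px hx] [Py hy]; split; first exact: ID.
    by move=> p Pp; rewrite mulrDl hx ?hy ?addr0.
  + move=> k x [Px hx]; split; first exact: IZ.
    by move=> p Pp; rewrite -scalerAl hx // scaler0.
  + move=> a x Aa [Px hx]; split; split.
    * exact: IMl.
    * by move=> p Pp; rewrite -mulrA hx // mulr0.
    * exact: IMr.
    * by move=> p Pp; rewrite -mulrA hx //; apply: IMl.
- by move=> x y [Px hx] [Py hy]; apply: hx.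
Qed.

Lemma ann_l P m : is_ideal A P -> P m -> (forall p, P p -> p * m = 0) -> m = 0.
Proof.
move=> hP Pm mP0.
apply: (hsp (I := fun m => P m /\ forall p, P p -> p * m = 0)); last by split.
- split.
  + by move=> x [/(IA hP)].
  + by split=> [|p _]; [apply: I0 | rewrite mulr0].
  + move=> x y [Px hx] [Py hy]; split; first exact: ID.
    by move=> p Pp; rewrite mulrDr hx ?hy ?addr0.
  + move=> k x [Px hx]; split; first exact: IZ.
    by move=> p Pp; rewrite -scalerAr hx // scaler0.
  + move=> a x Aa [Px hx]; split; split.
    * exact: IMl.
    * by move=> p Pp; rewrite mulrA hx //; apply: IMr.
    * exact: IMr.
    * by move=> p Pp; rewrite mulrA hx // mul0r.
- by move=> x y [Px hx] [Py hy]; apply: hy.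
Qed.

Lemma eIe I e : is_ideal A I -> I e -> (forall y, I y -> e * y * e = 0) -> e = 0.
Proof.
move=> hI Ie he.
pose H := fun m => I m /\ forall w, I w -> e * w * m = 0.
have hH : is_ideal A H.
  split.
  + by move=> x [/(IA hI)].
  + by split=> [|p _]; [apply: I0 | rewrite mulr0].
  + move=> x y [Px hx] [Py hy]; split; first exact: ID.
    by move=> p Pp; rewrite mulrDr hx ?hy ?addr0.
  + move=> k x [Px hx]; split; first exact: IZ.
    by move=> p Pp; rewrite -scalerAr hx // scaler0.
  + move=> a x Aa [Px hx]; split; split.
    * exact: IMl.
    * by move=> p Pp; rewrite mulrA -(mulrA e) hx //; apply: IMr.
    * exact: IMr.
    * by move=> p Pp; rewrite mulrA hx // mul0r.
apply: (ann_r hI Ie) => w Iw.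
apply: (ann_r hH).
- split; first by apply: IMr => //; apply: (IA hI).
  by move=> w' Iw'; rewrite !mulrA he // mul0r.
- by move=> h [Ih hh]; apply: hh.
Qed.

Lemma ess_ideal I : essential_ideal A I -> is_ideal A I.
Proof. by case. Qed.

Lemma faith I q : essential_ideal A I -> (forall x, I x -> x * q = 0) -> q = 0.
Proof. by case: hQs => _ h _; apply: h. Qed.

Lemma ess_inter I J : essential_ideal A I -> essential_ideal A J ->
  essential_ideal A (fun x => I x /\ J x).
Proof.
have inter_ideal : forall I J, is_ideal A I -> is_ideal A J -> is_ideal A (fun x => I x /\ J x).
  move=> I' J' hI hJ; split.
  + by move=> x [/(IA hI)].
  + by split; apply: I0.
  + by move=> x y [? ?] [? ?]; split; apply: ID.
  + by move=> k x [? ?]; split; apply: IZ.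
  + by move=> a x Aa [? ?]; split; split; [apply: (IMl hI)|apply: (IMl hJ)|apply: (IMr hI)|apply: (IMr hJ)].
move=> [hI eI] [hJ eJ]; split; first exact: inter_ideal.
move=> K hK nK.
have [x [Ix [Kx nx]]] := eI K hK nK.
have [y [Jy [[Iy Ky] ny]]] := eJ _ (inter_ideal _ _ hI hK) (ex_intro _ x (conj (conj Ix Kx) nx)).
by exists y.
Qed.


Lemma comm_central I w : essential_ideal A I -> (forall x, I x -> x * w = w * x) -> central w.
Proof.
move=> eI hw s.
case: hQs => hq _ _.
have [J [eJ hJ]] := hq s.
have eK := ess_inter eI eJ.
have hI := ess_ideal eI.
apply/eqP; rewrite eq_sym -subr_eq0; apply/eqP.
apply: (faith eK) => y [Iy Jy].
apply: (faith eI) => x Ix.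
have Ays : A (y * s) by case: (hJ y Jy).
have Ixys : I (x * (y * s)) by apply: IMr.
rewrite mulrBr mulrBr !mulrA.
have -> : x * y * s * w = w * (x * (y * s)) by rewrite -(hw _ Ixys) !mulrA.
have -> : x * y * w * s = w * (x * (y * s)).
  by rewrite -(mulrA x y w) (hw y Iy) mulrA (hw x Ix) !mulrA.
by rewrite subrr.
Qed.

Lemma cl z s : central z -> lie z s = 0. Proof. by move=> hz; rewrite lieE hz subrr. Qed.
Lemma cr z s : central z -> lie s z = 0. Proof. by move=> hz; rewrite lieE hz subrr. Qed.
Lemma lie_cmul_r c u w : central c -> lie u (c * w) = c * lie u w.
Proof. by move=> hc; rewrite lieM (cr _ hc) mul0r add0r. Qed.
Lemma lie_cmul_l c u w : central c -> lie (c * u) w = c * lie u w.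
Proof. by move=> hc; rewrite !lieE mulrBr !mulrA -(hc w). Qed.
Lemma centralN z : central z -> central (- z).
Proof. by move=> hz s; rewrite mulNr mulrN hz. Qed.
Lemma lie0_comm x w : lie x w = 0 -> w * x = x * w.
Proof. by move/eqP; rewrite subr_eq0 => /eqP ->. Qed.

Lemma c2zero c : A c -> central c -> c * c = 0 -> c = 0.
Proof.
move=> Ac hc cc; apply: (eIe idealA Ac) => y Ay.
by rewrite -mulrA -(hc y) mulrA cc mul0r.
Qed.

Lemma GH I g : essential_ideal A I -> A g ->
  (forall x y, I x -> I y -> lie g (lie x y) = 0) -> central g.
Proof.
move=> eI Ag hg; have hI := ess_ideal eI.
apply: (comm_central eI) => x Ix.
suff: lie g x = 0 by move/lie0_comm.
set e := lie g x.
have Ie : I e by apply: Ilie_l.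
have E1 : forall y, I y -> e * lie x y = 0.
  move=> y Iy; have := hg x (x * y) Ix (IMM hI Ix Iy).
  have -> : lie x (x * y) = x * lie x y by rewrite lieM liexx mul0r add0r.
  by rewrite lieM (hg x y Ix Iy) mulr0 addr0.
apply: (eIe hI Ie) => y Iy.
have := E1 (y * g) (IMr hI Ag Iy).
rewrite lieM mulrDr mulrA (E1 y Iy) mul0r add0r.
by rewrite (lieC x g) -/e !mulrN mulrA => /eqP; rewrite oppr_eq0 => /eqP.
Qed.

Lemma posner I b : is_ideal A I -> A b ->
  (forall r, I r -> lie b (lie b r) = 0) -> forall r, I r -> lie b r = 0.
Proof.
move=> hI Ab hb.
have Id : forall r, I r -> I (lie b r) by move=> r Ir; apply: Ilie_l.
have E1 : forall r s, I r -> I s -> lie b r * lie b s = 0.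
  move=> r s Ir Is; apply: h2; first by apply: AM; apply: (IA hI); apply: Id.
  have := hb (r * s) (IMM hI Ir Is).
  rewrite lieM lieDr !lieM (hb r Ir) (hb s Is) mul0r mulr0 add0r addr0.
  by rewrite mulr2n.
have E2 : forall r s, I r -> I s -> lie b r * s * lie b r = 0.
  move=> r s Ir Is; have := E1 r (s * r) Ir (IMM hI Is Ir).
  by rewrite lieM mulrDr mulrA (E1 r s Ir Is) mul0r add0r mulrA.
move=> r Ir; apply: (eIe hI (Id r Ir)) => s Is; exact: E2.
Qed.

Lemma core I a : essential_ideal A I -> (forall x, I x -> A (a * x) /\ A (x * a)) ->
  (forall x y, I x -> I y -> central (lie a (lie x y))) -> central a.
Proof.
move=> eI hIa hc; have hI := ess_ideal eI.
have Aa_ : forall x, I x -> A (lie a x) by move=> x Ix; case: (hIa x Ix) => ? ?; apply: AB.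
have S1 : forall x y, I x -> I y -> lie a (lie x y) = 0.
  move=> x y Ix Iy; set u := lie x y; have Iu : I u := Ilie hI Ix Iy.
  set c := lie a u; have cc : central c := hc x y Ix Iy; have Ac : A c := Aa_ u Iu.
  have E : forall r, I r -> c * lie u (lie u r) = 0.
    move=> r Ir; set w := lie u r; have Iw : I w := Ilie hI Iu Ir.
    have huw : central (lie a (u * w)).
      have -> : u * w = lie u (u * r) by rewrite lieM liexx mul0r add0r.
      exact: hc _ _ Iu (IMM hI Iu Ir).
    have dw : central (lie a w) := hc u r Iu Ir.
    move: (cr u huw); rewrite lieM -/c lieDr (lie_cmul_r _ _ cc) lieM liexx mul0r add0r.
    by rewrite (cr _ dw) mulr0 addr0.
  have Ab : A (c * u) by apply: AM => //; apply: (IA hI).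
  have hb : forall r, I r -> lie (c * u) (lie (c * u) r) = 0.
    by move=> r Ir; rewrite !(lie_cmul_l _ _ cc) (lie_cmul_r _ _ cc) (E r Ir) mulr0.
  have bc : central (c * u).
    apply: (comm_central eI) => r Ir; apply: lie0_comm; exact: posner hI Ab hb r Ir.
  apply: c2zero => //.
  have <- : lie a (c * u) = c * c by rewrite lieM (cr _ cc) mul0r add0r.
  exact: cr.
have S2 : forall r, I r -> central (lie a r).
  move=> r Ir; apply: (GH eI (Aa_ r Ir)) => x y Ix Iy.
  have := S1 r (lie x y) Ir (Ilie hI Ix Iy).
  by rewrite jacobi (S1 x y Ix Iy) lie0r addr0.
have S3 : forall x, I x -> lie a x = 0.
  move=> x Ix; set c := lie a x; have cc : central c := S2 x Ix; have Ac : A c := Aa_ x Ix.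
  have E : forall y, I y -> c * lie x y = 0.
    move=> y Iy; move: (cr x (S2 (x * y) (IMM hI Ix Iy))).
    rewrite lieM -/c lieDr (lie_cmul_r _ _ cc) lieM liexx mul0r add0r.
    by rewrite (cr _ (S2 y Iy)) mulr0 addr0.
  have bc : central (c * x).
    apply: (comm_central eI) => r Ir; apply: lie0_comm.
    by rewrite (lie_cmul_l _ _ cc) E.
  apply: c2zero => //.
  have <- : lie a (c * x) = c * c by rewrite lieM (cr _ cc) mul0r add0r.
  exact: cr.
apply: (comm_central eI) => x Ix; apply: lie0_comm; exact: S3.
Qed.

Lemma cs_lie (P : S -> Prop) x y : P x -> P y -> comm_span P (lie x y).
Proof.
move=> Px Py; exists [:: (x, y)]; split; last by rewrite big_seq1.
by move=> p; rewrite inE => /eqP ->.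
Qed.

Lemma cs_0 (P : S -> Prop) : comm_span P 0.
Proof. by exists [::]; split => //; rewrite big_nil. Qed.

Lemma cs_add (P : S -> Prop) u v : comm_span P u -> comm_span P v -> comm_span P (u + v).
Proof.
move=> [s1 [hs1 ->]] [s2 [hs2 ->]]; exists (s1 ++ s2); split; last by rewrite big_cat.
by move=> p; rewrite mem_cat => /orP [/hs1|/hs2].
Qed.

Lemma cs_ind (P : S -> Prop) (T : S -> Prop) : T 0 -> (forall u v, T u -> T v -> T (u + v)) ->
  (forall x y, P x -> P y -> T (lie x y)) -> forall z, comm_span P z -> T z.
Proof.
move=> T0 TD TL z [s [hs ->]]; elim: s hs => [|p s IH] hs; first by rewrite big_nil.
rewrite big_cons; apply: TD.
  by have [? ?] := hs p (mem_head _ _); apply: TL.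
by apply: IH => p' p's; apply: hs; rewrite in_cons p's orbT.
Qed.

Lemma cs_mono (P P' : S -> Prop) z : (forall x, P x -> P' x) -> comm_span P z -> comm_span P' z.
Proof.
move=> hP; apply: cs_ind; [exact: cs_0 | move=> *; exact: cs_add |].
by move=> x y Px Py; apply: cs_lie; apply: hP.
Qed.

Lemma cs_in I z : is_ideal A I -> comm_span I z -> I z.
Proof. move=> hI; apply: cs_ind; [exact: I0 | exact: ID | exact: Ilie]. Qed.

Lemma cs_scale (P : S -> Prop) (k : R) z : (forall (k : R) x, P x -> P (k *: x)) ->
  comm_span P z -> comm_span P (k *: z).
Proof.
move=> hP; apply: (cs_ind (T := fun z => comm_span P (k *: z))).
- by rewrite scaler0; exact: cs_0.
- by move=> u v hu hv; rewrite scalerDr; exact: cs_add.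
- by move=> x y Px Py; rewrite -lieZl; apply: cs_lie => //; apply: hP.
Qed.

Lemma main_sec Q : is_subalg Q -> (forall a, A a -> Q a) ->
  quotient_lie_algebra_of_quotients (comm_span A) (comm_span Q).
Proof.
move=> hQ hAQ.
have [I0 [eI0 _]] : exists I, essential_ideal A I /\ forall x, I x -> A (x * 0) /\ A (0 * x).
  by case: hQs => hq _ _; apply: hq.
have CA : forall z, comm_span A z -> (forall y, comm_span A y -> lie z y = 0) -> central z.
  move=> z Lz hz; apply: (GH eI0 (cs_in idealA Lz)) => x y Ix Iy.
  by apply: hz; apply: cs_lie; apply: (IA (ess_ideal eI0)).
split.
- by move=> x; apply: cs_mono.
- move=> z [Lz hz]; have cz := CA z Lz hz; split; first exact: cs_mono hAQ Lz.
  by move=> y _; exact: cl.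
- by move=> z Lz [_ hz]; split => // y Ly; apply: hz; exact: cs_mono hAQ Ly.
move=> q Lq nq.
case: hQs => hq _ _; have [I [eI hIq]] := hq q; have hI := ess_ideal eI.
have Lq_ : forall x y, I x -> I y -> comm_span A (lie (lie x y) q).
  move=> x y Ix Iy.
  have -> : lie (lie x y) q = lie (lie x q) y + lie x (lie y q).
    by rewrite lieC jacobi opprD (lieC q x) (lieC q y) lieNl lieNr !opprK.
  have Aq : forall x, I x -> A (lie x q) by move=> x' Ix'; case: (hIq x' Ix') => ? ?; apply: AB.
  by apply: cs_add; apply: cs_lie => //; [exact: Aq | exact: (IA hI) | exact: (IA hI) | exact: Aq].
exists (comm_span I); split.
- split.
  + by move=> x; apply: cs_mono; apply: (IA hI).
  + exact: cs_0.
  + by move=> x y; exact: cs_add.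
  + by move=> k x; apply: cs_scale; exact: (IZ hI).
  + move=> a x La Jx.
    apply: (cs_ind (T := fun a => forall x, comm_span I x -> comm_span I (lie a x))) La x Jx.
    * by move=> x _; rewrite lie0l; exact: cs_0.
    * by move=> u v Tu Tv x Jx; rewrite lieDl; apply: cs_add; [apply: Tu | apply: Tv].
    * move=> u v Au Av x Jx.
      apply: (cs_ind (T := fun x => comm_span I (lie (lie u v) x))) Jx.
      - by rewrite lie0r; exact: cs_0.
      - by move=> s t hs ht; rewrite lieDr; exact: cs_add.
      - move=> s t Is It; rewrite jacobi; apply: cs_add; apply: cs_lie => //;
          by apply: (Ilie_l hI) => //; apply: Alie.
- move=> a La ha.
  have ca : central a.
    apply: (core eI).
      move=> x Ix; split; apply: AM => //; (exact: cs_in idealA La || exact: (IA hI)).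
    move=> x y Ix Iy; have [Lc hc] := ha _ (cs_lie Ix Iy); exact: CA _ Lc hc.
  by split => // y _; exact: cl.
- apply: NNPP => hn; apply: nq.
  have cq : central q.
    apply: (core eI) => [x Ix|x y Ix Iy]; first by case: (hIq x Ix).
    rewrite lieC; apply: centralN.
    have Lc := Lq_ x y Ix Iy.
    apply: (CA _ Lc) => w Lw.
    have [_ h] : lie_center (comm_span Q) (lie (lie x y) q).
      apply: NNPP => h; apply: hn; exists (lie x y); split; [exact: cs_lie | exact: h].
    by apply: h; exact: cs_mono hAQ Lw.
  by split => // y _; exact: cl.
- move=> j Jj; exists (lie j q); split.
    apply: (cs_ind (T := fun j => comm_span A (lie j q))) Jj.
    + by rewrite lie0l; exact: cs_0.
    + by move=> u v hu hv; rewrite lieDl; exact: cs_add.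
    + exact: Lq_.
  by rewrite subrr; split; [exact: cs_0 | move=> y _; exact: lie0l].
Qed.

End Main.

Theorem mainTheorem4 (R : comPzRingType) (S : algType R) (A Q : S -> Prop) :
  is_subalg A -> semiprime A -> two_torsion_free A ->
  is_Qs A ->
  is_subalg Q -> (forall a, A a -> Q a) ->
  quotient_lie_algebra_of_quotients (comm_span A) (comm_span Q).
Proof.
move=> hA hsp h2 hQs hQ hAQ.
exact: (main_sec hA hsp h2 hQs hQ hAQ).
Qed.
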